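(* Let $X$ be a space possessing a binary normal closed subbase $\mathcal S$. Then every $\mathcal S$-convex $\mathcal S$-open continuous surjection $f\colon X\to Y$ is invertible: for every space $Z$ and every continuous map $g\colon Z\to Y$ there exists a continuous map $h\colon Z\to X$ with $f\circ h=g$.
   Context: All spaces are Tychonoff and maps continuous. A family $\mathcal S$ of closed subsets of $X$ is a closed subbase if every closed set is an intersection of finite unions of members of $\mathcal S$. A family is linked if any two members intersect; $\mathcal S$ is binary if every linked subfamily has nonempty intersection. $\mathcal S$ is normal if for every disjoint $S_0,S_1\in\mathcal S$ there exist $T_0,T_1\in\mathcal S$ with $S_0\cap T_1=\varnothing=T_0\cap S_1$ and $T_0\cup T_1=X$. For $B\subset X$, $I_{\mathcal S}(B)=\bigcap\{S\in\mathcal S:B\subset S\}$; $B$ is $\mathcal S$-convex if $I_{\mathcal S}(\{x,y\})\subset B$ for all $x,y\in B$. A map $f\colon X\to Y$ is $\mathcal S$-convex if all its fibers $f^{-1}(y)$ are $\mathcal S$-convex, and $\mathcal S$-open if $f(X\setminus S)$ is open in $Y$ for every $S\in\mathcal S$. *)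

(* Defs.v *)
From mathcomp Require Import all_boot all_order all_algebra.
From mathcomp Require Import all_classical all_reals all_analysis.
From mathcomp Require Import Rstruct Rstruct_topology.
Set Implicit Arguments. Unset Strict Implicit. Unset Printing Implicit Defensive.
Local Open Scope classical_set_scope.

Definition tychonoff_space (T : topologicalType) : Prop :=
  accessible_space T /\
  forall (x : T) (B : set T), closed B -> ~ B x ->
    exists f : T -> Rdefinitions.R,
      continuous f /\ f x = 0%R /\ (forall y, B y -> f y = 1%R).

Definition closed_subbase (T : topologicalType) (S : set (set T)) : Prop :=
  (forall A, S A -> closed A) /\
  forall C : set T, closed C ->
    exists F : set (set T),
      (forall B, F B -> exists s : seq (set T),
           (forall A, A \in s -> S A) /\ B = \big[setU/set0]_(A <- s) A) /\
      C = \bigcap_(B in F) B.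

Definition linked_family (T : Type) (L : set (set T)) : Prop :=
  forall A B, L A -> L B -> A `&` B !=set0.

Definition binary_subbase (T : Type) (S : set (set T)) : Prop :=
  forall L, L `<=` S -> linked_family L -> \bigcap_(A in L) A !=set0.

Definition normal_family (T : Type) (S : set (set T)) : Prop :=
  forall S0 S1, S S0 -> S S1 -> S0 `&` S1 = set0 ->
    exists T0 T1, S T0 /\ S T1 /\ S0 `&` T1 = set0 /\ T0 `&` S1 = set0 /\
      T0 `|` T1 = setT.

Definition S_hull (T : Type) (S : set (set T)) (B : set T) : set T :=
  \bigcap_(A in [set A | S A /\ B `<=` A]) A.

Definition S_convex (T : Type) (S : set (set T)) (B : set T) : Prop :=
  forall x y, B x -> B y -> S_hull S [set x; y] `<=` B.

Definition S_convex_map (T U : Type) (S : set (set T)) (f : T -> U) : Prop :=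
  forall y : U, S_convex S (f @^-1` [set y]).

Definition S_open_map (T : Type) (U : topologicalType) (S : set (set T))
    (f : T -> U) : Prop :=
  forall A, S A -> open (f @` (~` A)).

Definition invertible_map (X Y : topologicalType) (f : X -> Y) : Prop :=
  forall (Z : topologicalType), tychonoff_space Z ->
    forall g : Z -> Y, continuous g ->
      exists h : Z -> X, continuous h /\ f \o h = g.

(* Main.v *)
Require Import Defs.
From mathcomp Require Import all_boot all_order all_algebra.
From mathcomp Require Import all_classical all_reals all_analysis.
From mathcomp Require Import Rstruct Rstruct_topology lra.
Local Open Scope classical_set_scope.

Set Implicit Arguments. Unset Strict Implicit. Unset Printing Implicit Defensive.

Section Gate.
Context (X : topologicalType) (S : set (set X)).
Context (T1X : accessible_space X) (hcs : closed_subbase S)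
  (hbin : binary_subbase S) (hnorm : normal_family S).

Local Notation UU s := (\big[setU/set0]_(A <- s) A).

Lemma bigU_mem (s : seq (set X)) x : UU s x <-> exists2 A, A \in s & A x.
Proof.
elim: s => [|A s IH]; first by rewrite big_nil; split => // -[].
rewrite big_cons; split.
  case=> [Ax|/IH [B Bs Bx]]; first by exists A => //; rewrite inE eqxx.
  by exists B => //; rewrite inE Bs orbT.
case=> B; rewrite inE => /orP [/eqP -> Ax|Bs Bx]; first by left.
by right; apply/IH; exists B.
Qed.

Lemma closed_sep C p : closed C -> ~ C p ->
  exists s : seq (set X), (forall A, A \in s -> S A) /\ C `<=` UU s /\ ~ UU s p.
Proof.
move=> cC nCp; have [F [HF CE]] := hcs.2 C cC.
have [B FB nBp] : exists2 B, F B & ~ B p.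
  apply: contra_notP nCp => H; rewrite CE => B FB.
  by apply: contra_notP (H) => nBp; exists B.
have [s [sS BE]] := HF B FB.
exists s; split => //; split; last by rewrite -BE.
by rewrite -BE CE => x; apply.
Qed.

Lemma sep_pt p q : p <> q -> exists A, S A /\ A p /\ ~ A q.
Proof.
move=> pq; have cq : closed [set p] := @accessible_closed_set1 X T1X p.
have nq : ~ [set p] q by move=> /= qp; apply: pq.
have [s [sS [ps nqs]]] := closed_sep cq nq.
have /bigU_mem [A As Ap] := ps p (erefl p).
exists A; split; first exact: sS.
by split => // Aq; apply: nqs; apply/bigU_mem; exists A.
Qed.

Lemma exT0 p q : p <> q -> exists T0, S T0 /\ T0 p.
Proof. by move=> /sep_pt [A [SA [Ap _]]]; exists A. Qed.

Lemma Tsep p W : S W -> ~ W p -> (exists T0, S T0 /\ T0 p) ->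
  exists T, S T /\ T p /\ T `&` W = set0.
Proof.
move=> SW nWp [T0 [ST0 T0p]].
have [W0|/set0P [w Ww]] := eqVneq W set0.
  by exists T0; rewrite W0 setI0.
apply: contra_notP nWp => H.
pose L := [set A | A = W \/ (S A /\ A p)].
have LS : L `<=` S by move=> A [->|[]].
have lin : linked_family L.
  have WT : forall T, S T -> T p -> T `&` W !=set0.
    move=> T ST Tp; apply/set0P/eqP => TW; apply: H; by exists T.
  move=> A B [->|[SA Ap]] [->|[SB Bp]].
  - by exists w.
  - by rewrite setIC; apply: WT.
  - exact: WT.
  - by exists p.
have [q Lq] := hbin LS lin.
have Wq : W q by apply: Lq; left.
have [->//|pq] := pselect (p = q).
have [A [SA [Ap nAq]]] := sep_pt pq.
by exfalso; apply: nAq; apply: Lq; right.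
Qed.

Definition partner p V := S V /\ exists T, S T /\ T p /\ T `&` V = set0.

Lemma enlarge p V : partner p V -> exists U V', S U /\ U p /\ U `&` V = set0 /\
  V `<=` V' /\ U `|` V' = setT /\ partner p V'.
Proof.
move=> [SV [T [ST [Tp TV]]]].
have [T0 [T1 [ST0 [ST1 [TT1 [T0V T01]]]]]] := hnorm ST SV TV.
have nT1p : ~ T1 p.
  move=> T1p; have : (T `&` T1) p by split.
  by rewrite TT1.
have T0p : T0 p.
  have : (T0 `|` T1) p by rewrite T01.
  by case=> // /nT1p.
exists T0, T1; split => //; split => //; split => //; split.
  move=> x Vx; have : (T0 `|` T1) x by rewrite T01.
  case=> // T0x; have : (T0 `&` V) x by split.
  by rewrite T0V.
by split => //; split => //; exists T.
Qed.


Lemma convexI F U : S_convex S F -> S U -> S_convex S (F `&` U).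
Proof.
move=> cF SU x y [Fx Ux] [Fy Uy] z Hz; split; first by apply: (cF x y).
by apply: Hz; split => // w [->|->].
Qed.

Lemma merge2 p F V1 V2 : S_convex S F -> partner p V1 -> partner p V2 ->
  F `<=` V1 `|` V2 -> exists V, partner p V /\ F `<=` V.
Proof.
move=> cF /enlarge [U1 [W1 [SU1 [U1p [U1V1 [V1W1 [UW1 pW1]]]]]]].
move=> /enlarge [U2 [W2 [SU2 [U2p [U2V2 [V2W2 [UW2 pW2]]]]]]] FV.
have [FW1|/nonsubset [a [Fa nW1a]]] := pselect (F `<=` W1); first by exists W1.
have [FW2|/nonsubset [c [Fc nW2c]]] := pselect (F `<=` W2); first by exists W2.
exfalso.
have U1a : U1 a.
  have : (U1 `|` W1) a by rewrite UW1.
  by case.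
have U2c : U2 c.
  have : (U2 `|` W2) c by rewrite UW2.
  by case.
pose L := [set A | A = U1 \/ A = U2 \/ (S A /\ A a /\ A c)].
have LS : L `<=` S by move=> A [->|[->|[]]].
have lin : linked_family L.
  move=> A B [->|[->|[_ [Aa Ac]]]] [->|[->|[_ [Ba Bc]]]];
    solve [by exists p | by exists a | by exists c].
have [q Lq] := hbin LS lin.
have Fq : F q.
  apply: (cF a c Fa Fc) => A [SA aA]; apply: Lq; right; right.
  by split => //; split; apply: aA; [left|right].
have U1q : U1 q by apply: Lq; left.
have U2q : U2 q by apply: Lq; right; left.
case: (FV q Fq) => Vq.
  have : (U1 `&` V1) q by split.
  by rewrite U1V1.
have : (U2 `&` V2) q by split.
by rewrite U2V2.
Qed.

Lemma merge_list p (s : seq (set X)) : forall F, S_convex S F ->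
  (forall A, A \in s -> S A /\ ~ A p) -> (exists T0, S T0 /\ T0 p) ->
  F `<=` UU s -> F = set0 \/ exists V, partner p V /\ F `<=` V.
Proof.
elim: s => [|W s IH] F cF Hs hT0 FU.
  by left; apply/seteqP; split => // x /FU; rewrite big_nil.
have [SW nWp] : S W /\ ~ W p by apply: Hs; rewrite inE eqxx.
have pW : partner p W.
  by split => //; apply: Tsep.
have [U [V' [SU [Up [UW [WV' [UV' pV']]]]]]] := enlarge pW.
have FUs : F `&` U `<=` UU s.
  move=> x [Fx Ux]; move: (FU x Fx); rewrite big_cons; case=> // Wx.
  have : (U `&` W) x by split.
  by rewrite UW.
have Hs' : forall A, A \in s -> S A /\ ~ A p.
  by move=> A As; apply: Hs; rewrite inE As orbT.
case: (IH _ (convexI cF SU) Hs' hT0 FUs) => [FU0|[V'' [pV'' FV'']]].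
  right; exists V'; split => // x Fx.
  have : (U `|` V') x by rewrite UV'.
  case=> // Ux; have : (F `&` U) x by split.
  by rewrite FU0.
right; apply: (merge2 cF pV' pV'') => x Fx.
have : (U `|` V') x by rewrite UV'.
case=> [Ux|]; last by left.
by right; apply: FV''.
Qed.

Lemma closed_convex_S F p : closed F -> S_convex S F -> F !=set0 -> ~ F p ->
  exists V, S V /\ F `<=` V /\ ~ V p.
Proof.
move=> cF vF [q Fq] nFp.
have [s [sS [Fs nsp]]] := closed_sep cF nFp.
have hT0 : exists T0, S T0 /\ T0 p.
  by apply: (@exT0 p q) => pq; apply: nFp; rewrite pq.
have Hs : forall A, A \in s -> S A /\ ~ A p.
  move=> A As; split; first exact: sS.
  by move=> Ap; apply: nsp; apply/bigU_mem; exists A.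
case: (merge_list vF Hs hT0 Fs) => [F0|[V [[SV [T [ST [Tp TV]]]] FV]]].
  by move: Fq; rewrite F0.
exists V; split => //; split => // Vp.
have : (T `&` V) p by split.
by rewrite TV.
Qed.

Definition L1 (x0 : X) (F : set X) := [set A | S A /\ A x0 /\ F `&` A !=set0].
Definition gate (x0 : X) (F : set X) := F `&` \bigcap_(A in L1 x0 F) A.

Lemma gate_ex x0 F : closed F -> S_convex S F -> F !=set0 -> gate x0 F !=set0.
Proof.
move=> cF vF [w Fw].
pose L := [set A | L1 x0 F A \/ (S A /\ F `<=` A)].
have LS : L `<=` S by move=> A [[]|[]].
have lin : linked_family L.
  move=> A B [[_ [Ax0 [u [Fu Au]]]]|[_ FA]] [[_ [Bx0 [v [Fv Bv]]]]|[_ FB]].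
  - by exists x0.
  - by exists u; split => //; apply: FB.
  - by exists v; split => //; apply: FA.
  - by exists w; split; [apply: FA|apply: FB].
have [p Lp] := hbin LS lin.
have Fp : F p.
  have [//|nFp] := pselect (F p).
  have [V [SV [FV nVp]]] := closed_convex_S cF vF (ex_intro _ w Fw) nFp.
  by exfalso; apply: nVp; apply: Lp; right.
by exists p; rewrite /gate; split => // A LA; apply: Lp; left.
Qed.

Lemma gate_uniq x0 F p p' : gate x0 F p -> gate x0 F p' -> p = p'.
Proof.
move=> [Fp Gp] [Fp' Gp']; have [//|pp'] := pselect (p = p'); exfalso.
have [A [SA [Ap nAp']]] := sep_pt pp'.
have [T [ST [Tp' TA]]] := Tsep SA nAp' (exT0 (nesym pp')).
have AT : A `&` T = set0 by rewrite setIC.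
have [T0 [T1 [ST0 [ST1 [AT1 [T0T T01]]]]]] := hnorm SA ST AT.
have : (T0 `|` T1) x0 by rewrite T01.
case=> [T0x0|T1x0].
  have T0p : T0 p.
    have : (T0 `|` T1) p by rewrite T01.
    case=> // T1p; have : (A `&` T1) p by split.
    by rewrite AT1.
  have T0p' : T0 p' by apply: Gp'; split => //; split => //; exists p.
  have : (T0 `&` T) p' by split.
  by rewrite T0T.
have T1p' : T1 p'.
  have : (T0 `|` T1) p' by rewrite T01.
  case=> // T0p'; have : (T0 `&` T) p' by split.
  by rewrite T0T.
have T1p : T1 p by apply: Gp; split => //; split => //; exists p'.
have : (A `&` T1) p by split.
by rewrite AT1.
Qed.

Lemma gate_far x0 F z g : gate x0 F g -> F z -> z <> g ->
  exists T0 T1, S T0 /\ S T1 /\ ~ T0 z /\ F `&` ~` T1 !=set0 /\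
  (forall F' g', gate x0 F' g' -> F' `&` ~` T1 !=set0 -> T0 g').
Proof.
move=> [Fg Gg] Fz zg.
have [W [[SW [Wx0 [w [Fw Ww]]]] nWz]] : exists W, L1 x0 F W /\ ~ W z.
  have [//|H] := pselect (exists W, L1 x0 F W /\ ~ W z).
  exfalso; apply: zg; apply: (@gate_uniq x0 F z g) => //.
  rewrite /gate; split => // A LA.
  by have [//|nAz] := pselect (A z); exfalso; apply: H; exists A.
have [T [ST [Tz TW]]] := Tsep SW nWz (exT0 zg).
have WT : W `&` T = set0 by rewrite setIC.
have [T0 [T1 [ST0 [ST1 [WT1 [T0T T01]]]]]] := hnorm SW ST WT.
have nT1 : forall x, W x -> ~ T1 x.
  move=> x Wx T1x; have : (W `&` T1) x by split.
  by rewrite WT1.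
have T0x0 : T0 x0.
  have : (T0 `|` T1) x0 by rewrite T01.
  by case=> // /(nT1 _ Wx0).
exists T0, T1; split => //; split => //; split.
  move=> T0z; have : (T0 `&` T) z by split.
  by rewrite T0T.
split; first by exists w; split => //; apply: nT1.
move=> F' g' [F'g' Gg'] [x [F'x nT1x]]; apply: Gg'; split => //; split => //.
exists x; split => //.
have : (T0 `|` T1) x by rewrite T01.
by case.
Qed.
Lemma X_compact : compact [set: X].
Proof.
rewrite compact_ultra => F FU _.
pose L := [set A | S A /\ F A].
have LS : L `<=` S by move=> A [].
have lin : linked_family L.
  move=> A B [_ FA] [_ FB]; have FAB : F (A `&` B) by apply: filterI.
  have [//|nAB] := pselect (A `&` B !=set0); exfalso.
  have AB0 : A `&` B = set0.
    by apply/seteqP; split => // x ABx; apply: nAB; exists x.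
  move: FAB; rewrite AB0; exact: filter_not_empty.
have [p Lp] := hbin LS lin.
exists p; split => //.
have key : forall s : seq (set X), (forall A, A \in s -> S A) -> ~ UU s p ->
    F (~` UU s).
  elim=> [|A s IH] sS nsp; first by rewrite big_nil setC0; apply: filterT.
  rewrite big_cons setCU; apply: filterI.
    case: (in_ultra_setVsetC A FU) => // FA; exfalso; apply: nsp.
    rewrite big_cons; left; apply: Lp; split => //; apply: sS.
    by rewrite inE eqxx.
  apply: IH; first by move=> B Bs; apply: sS; rewrite inE Bs orbT.
  by move=> sp; apply: nsp; rewrite big_cons; right.
move=> O; rewrite /= nbhsE; case=> O' [oO' O'p] O'O.
have cC : closed (~` O') by apply: open_closedC.
have nCp : ~ (~` O') p by [].
have [s [sS [Cs nsp]]] := closed_sep cC nCp.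
apply: filterS (key s sS nsp) => x nsx.
apply: O'O; have [//|nO'x] := pselect (O' x).
by exfalso; apply: nsx; apply: Cs.
Qed.
End Gate.

Lemma tych_hausdorff (T : topologicalType) : tychonoff_space T -> hausdorff_space T.
Proof.
move=> [T1 cr] p q clpq; have [//|pq] := pselect (p = q); exfalso.
have cq : closed [set q] := @accessible_closed_set1 T T1 q.
have nqp : ~ [set q] p by move=> /= pqE; apply: pq.
have [f [cf [fp fq]]] := cr p [set q] cq nqp.
have e2 : (0 < (1/2 : Rdefinitions.R))%R by lra.
have N1 : nbhs p (f @^-1` ball (f p) (1/2 : Rdefinitions.R)%R).
  by apply: cf; apply: nbhsx_ballx.
have N2 : nbhs q (f @^-1` ball (f q) (1/2 : Rdefinitions.R)%R).
  by apply: cf; apply: nbhsx_ballx.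
have [t [t1 t2]] := clpq _ _ N1 N2.
move: t1 t2; rewrite /= fp (fq q erefl) /ball /=.
move=> /Num.Theory.ltr_normlP [a b] /Num.Theory.ltr_normlP [c d].
move: a b c d; generalize (f t) => r a b c d; clear -a d; lra.
Qed.

Theorem corollary1p3 (X : topologicalType) (S : set (set X)) :
  tychonoff_space X -> closed_subbase S -> binary_subbase S -> normal_family S ->
  forall (Y : topologicalType) (f : X -> Y),
    tychonoff_space Y -> continuous f -> (forall y : Y, exists x : X, f x = y) ->
    S_convex_map S f -> S_open_map S f ->
    invertible_map f.
Proof.
move=> tX hcs hbin hnorm Y f tY cf fsurj fconv fopen Z tZ g cg.
have T1X := tX.1.
have hX := tych_hausdorff tX.
have hY := tych_hausdorff tY.
have [[x0 _]|noX] := pselect (exists x : X, True); last first.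
  have nZ : Z -> False.
    by move=> z; have [x _] := fsurj (g z); apply: noX; exists x.
  exists (fun z => False_rect _ (nZ z)); split.
    by move=> z; case: (nZ z).
  by apply: funext => z; case: (nZ z).
pose Fy (y : Y) := f @^-1` [set y].
have cFy : forall y, closed (Fy y).
  move=> y; apply: preimage_closed; first by move=> x _; apply: cf.
  exact: (@accessible_closed_set1 Y tY.1 y).
have neFy : forall y, Fy y !=set0.
  by move=> y; have [x fx] := fsurj y; exists x.
pose s y := xget x0 (gate S x0 (Fy y)).
have sG : forall y, gate S x0 (Fy y) (s y).
  move=> y; apply: xgetPex.
  exact: (gate_ex T1X hcs hbin hnorm x0 (cFy y) (fconv y) (neFy y)).
have fS : forall y, f (s y) = y by move=> y; case: (sG y).
have notcl : forall y z, z <> s y -> ~ cluster (s @ nbhs y) z.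
  move=> y z zs cl.
  have [fzy|fzy] := pselect (f z = y).
    have [T0 [T1 [ST0 [ST1 [nT0z [[w [Fw nT1w]] HT]]]]]] :=
      gate_far T1X hcs hbin hnorm (sG y) fzy zs.
    have N : nbhs y (f @` (~` T1)).
      by apply: open_nbhs_nbhs; split; [exact: fopen | exists w].
    have A1 : (s @ nbhs y) T0.
      apply: filterS N => y' [x nT1x fxy'].
      by apply: (HT (Fy y') (s y') (sG y')); exists x.
    have B1 : nbhs z (~` T0).
      by apply: open_nbhs_nbhs; split => //; apply: closed_openC; apply: hcs.1.
    by have [x [T0x nT0x]] := cl _ _ A1 B1.
  apply: fzy; apply: esym; apply: hY => A B nA nB.
  have A1 : (s @ nbhs y) (f @^-1` A).
    by apply: filterS nA => y' Ay'; rewrite /= fS.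
  have B1 : nbhs z (f @^-1` B) by apply: cf.
  by have [x [Ax Bx]] := cl _ _ A1 B1; exists (f x).
have scont : continuous s.
  move=> y.
  apply: (@compact_cluster_set1 X (s y) (s @ nbhs y) setT hX
    (X_compact hcs hbin) filterT _ filterT).
  apply/seteqP; split.
    move=> z clz; have [//|zs] := pselect (z = s y).
    by exfalso; apply: (notcl y z zs clz).
  move=> _ ->.
  have [w [_ clw]] := X_compact hcs hbin (F := s @ nbhs y) _ filterT.
  have [ws|ws] := pselect (w = s y); first by rewrite -ws.
  by exfalso; apply: (notcl y w ws clw).
exists (s \o g); split.
  by move=> z; apply: continuous_comp; [exact: cg | exact: scont].
by apply: funext => z; rewrite /= fS.
Qed.
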